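(* Let $(X,m)$ be an iterative midpoint set with associated infinitary operation $M$, let $I$ be a set, and let $s,t\in\mathcal{T}_I$ satisfy $\mathrm{w}(s)=\mathrm{w}(t)$. Then $\mathrm{val}(s,x)=\mathrm{val}(t,x)$ for all $x\colon I\to X$.
   Context: $(X,m)$ is a midpoint set ($m(x,x)=x$, $m(x,y)=m(y,x)$, $m(m(x,y),m(z,w))=m(m(x,z),m(y,w))$) that is iterative: for every set $Y$ and $h\colon Y\to X$, $t\colon Y\to Y$ there is a unique $u\colon Y\to X$ with $u(y)=m(h(y),u(t(y)))$; its associated $M\colon X^\omega\to X$ is the unique function with $M_l\,x_l=m(x_0,M_l\,x_{l+1})$. $\mathcal{T}_I$ is the smallest set with $I\subseteq\mathcal{T}_I$, containing the pair $(s,t)$ whenever $s,t\in\mathcal{T}_I$, and containing the sequence $(t_l)_l$ whenever each $t_l\in\mathcal{T}_I$ (well-founded trees with binary and $\omega$-branching nodes and $I$-labelled leaves). Interpretation: $\mathrm{val}(i,x)=x_i$, $\mathrm{val}((s,t),x)=m(\mathrm{val}(s,x),\mathrm{val}(t,x))$, $\mathrm{val}((t_l)_l,x)=M_l\,\mathrm{val}(t_l,x)$. Weight $\mathrm{w}(t)\colon I\to[0,1]$: $\mathrm{w}(i)(j)=\delta_{ij}$, $\mathrm{w}((s,t))(j)=\tfrac12\mathrm{w}(s)(j)+\tfrac12\mathrm{w}(t)(j)$, $\mathrm{w}((t_l)_l)(j)=\sum_{l\ge0}2^{-(l+1)}\mathrm{w}(t_l)(j)$. *)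

(* Defs.v *)
From Stdlib Require Import Reals ClassicalEpsilon.
From Coquelicot Require Import Coquelicot.
Set Implicit Arguments.
Open Scope R_scope.

Definition midpoint_set (X : Type) (m : X -> X -> X) : Prop :=
  (forall x, m x x = x) /\
  (forall x y, m x y = m y x) /\
  (forall x y z w, m (m x y) (m z w) = m (m x z) (m y w)).

Definition iterative (X : Type) (m : X -> X -> X) : Prop :=
  forall (Y : Type) (h : Y -> X) (t : Y -> Y),
    exists! u : Y -> X, forall y, u y = m (h y) (u (t y)).

Definition assoc_M_eq (X : Type) (m : X -> X -> X) (M : (nat -> X) -> X) : Prop :=
  forall x : nat -> X, M x = m (x 0%nat) (M (fun l => x (S l))).

Inductive tree (I : Type) : Type :=
| Leaf : I -> tree I
| Pair : tree I -> tree I -> tree I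
| Omega : (nat -> tree I) -> tree I.

Fixpoint val (X I : Type) (m : X -> X -> X) (M : (nat -> X) -> X)
  (t : tree I) (x : I -> X) : X :=
  match t with
  | Leaf i => x i
  | Pair s u => m (val m M s x) (val m M u x)
  | Omega f => M (fun l => val m M (f l) x)
  end.

Definition delta (I : Type) (i j : I) : R :=
  if excluded_middle_informative (i = j) then 1 else 0.

Fixpoint weight (I : Type) (t : tree I) (j : I) : R :=
  match t with
  | Leaf i => delta i j
  | Pair s u => / 2 * weight s j + / 2 * weight u j
  | Omega f => Series (fun l => (/ 2) ^ (S l) * weight (f l) j)
  end.

(* Main.v *)
Require Import Defs.
From Stdlib Require Import Reals List Permutation Lia Lra ClassicalEpsilon.
From Coquelicot Require Import Coquelicot.
Import ListNotations.

Lemma fa1 {A} (n : nat) (l1 l2 : list A) :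
  (length l1 <= n)%nat -> firstn n (l1 ++ l2) = l1 ++ firstn (n - length l1) l2.
Proof. intros H. rewrite firstn_app, firstn_all2 by lia. reflexivity. Qed.
Lemma sa1 {A} (n : nat) (l1 l2 : list A) :
  (length l1 <= n)%nat -> skipn n (l1 ++ l2) = skipn (n - length l1) l2.
Proof. intros H. rewrite skipn_app, skipn_all2 by lia. reflexivity. Qed.
Lemma fa2 {A} (n : nat) (l1 l2 : list A) :
  (n <= length l1)%nat -> firstn n (l1 ++ l2) = firstn n l1.
Proof. intros H. rewrite firstn_app. replace (n - length l1)%nat with 0%nat by lia.
  simpl. apply app_nil_r. Qed.
Lemma sa2 {A} (n : nat) (l1 l2 : list A) :
  (n <= length l1)%nat -> skipn n (l1 ++ l2) = skipn n l1 ++ l2.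
Proof. intros H. rewrite skipn_app. replace (n - length l1)%nat with 0%nat by lia.
  reflexivity. Qed.

Lemma pow2_pos (n : nat) : (1 <= 2 ^ n)%nat.
Proof. induction n; simpl; lia. Qed.

Section Bal.
Variable Z : Type.
Variable op : Z -> Z -> Z.
Hypothesis opC : forall a b, op a b = op b a.
Hypothesis opM : forall a b c e, op (op a b) (op c e) = op (op a c) (op b e).
Variable d : Z.

Fixpoint Bz (n : nat) (l : list Z) : Z :=
  match n with
  | O => hd d l
  | S n => op (Bz n (firstn (2 ^ n) l)) (Bz n (skipn (2 ^ n) l))
  end.

Lemma opK a b c e : op (op a b) (op c e) = op (op b c) (op a e).
Proof. rewrite (opC a b). apply opM. Qed.

Lemma cross (n : nat) : forall A C x y,
  (length A + 1 = 2 ^ n)%nat -> (length C + 1 = 2 ^ n)%nat ->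
  op (Bz n (A ++ [y])) (Bz n (x :: C)) = op (Bz n (A ++ [x])) (Bz n (y :: C)).
Proof.
  induction n as [|n IH]; intros A C x y HA HC.
  - simpl in *. destruct A; [|simpl in HA; lia]. destruct C; [|simpl in HC; lia].
    simpl. apply opC.
  - pose proof (pow2_pos n) as Hp. simpl Bz.
    assert (E2 : (2 ^ S n = 2 ^ n + 2 ^ n)%nat) by (simpl; lia).
    rewrite E2 in HA, HC.
    rewrite !fa2 by lia. rewrite !sa2 by lia.
    destruct (2 ^ n)%nat as [|h] eqn:Eh; [lia|].
    rewrite !firstn_cons, !skipn_cons.
    rewrite opK. rewrite (opK (Bz n (firstn (S h) A))).
    rewrite IH; [reflexivity| |].
    all: try rewrite length_skipn; try rewrite length_firstn; try lia.
Qed.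

Lemma swap (n : nat) : forall l1 l2 x y,
  (length l1 + length l2 + 2 = 2 ^ n)%nat ->
  Bz n (l1 ++ y :: x :: l2) = Bz n (l1 ++ x :: y :: l2).
Proof.
  induction n as [|n IH]; intros l1 l2 x y H.
  - simpl in H. lia.
  - pose proof (pow2_pos n) as Hp.
    assert (E2 : (2 ^ S n = 2 ^ n + 2 ^ n)%nat) by (simpl; lia).
    rewrite E2 in H. simpl Bz.
    destruct (Nat.le_gt_cases (length l1 + 2) (2 ^ n)) as [H1|H1].
    + rewrite !fa1 by lia. rewrite !sa1 by lia.
      destruct (2 ^ n - length l1)%nat as [|[|k]] eqn:Ek; try lia.
      simpl firstn; simpl skipn.
      f_equal. apply IH. rewrite length_firstn. lia.
    + destruct (Nat.le_gt_cases (2 ^ n) (length l1)) as [H2|H2].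
      * rewrite !fa2 by lia. rewrite !sa2 by lia. f_equal.
        apply IH. rewrite length_skipn. lia.
      * rewrite !fa1 by lia. rewrite !sa1 by lia.
        replace (2 ^ n - length l1)%nat with 1%nat by lia. simpl.
        apply cross; lia.
Qed.

Lemma Bz_perm (n : nat) : forall l l', Permutation l l' ->
  length l = (2 ^ n)%nat -> Bz n l = Bz n l'.
Proof.
  intros l l' HP. pattern l, l'. revert l l' HP.
  apply Permutation_ind_transp.
  - reflexivity.
  - intros x y l1 l2 H. apply swap. rewrite length_app in H. simpl in H. lia.
  - intros l l' l'' H1 IH1 H2 IH2 Hl. rewrite IH1 by auto. apply IH2.
    rewrite <- (Permutation_length H1). auto.
Qed.
End Bal.
Arguments Bz {Z}. Arguments Bz_perm {Z}.

Section Trees.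
Variable I : Type.

Fixpoint bal (d : tree I) (n : nat) (l : list (tree I)) : tree I :=
  match n with
  | O => hd d l
  | S n => Pair (bal d n (firstn (2 ^ n) l)) (bal d n (skipn (2 ^ n) l))
  end.

Definition split (t : tree I) : tree I * tree I :=
  match t with
  | Leaf a => (Leaf a, Leaf a)
  | Pair s u => (s, u)
  | Omega f => (f 0%nat, Omega (fun n => f (S n)))
  end.

Fixpoint slots (N : nat) (t : tree I) : list (tree I) :=
  match N with
  | O => [t]
  | S N => slots N (fst (split t)) ++ slots N (snd (split t))
  end.

Lemma length_slots N : forall t, length (slots N t) = (2 ^ N)%nat.
Proof. induction N; intros t; simpl; [reflexivity|]. rewrite length_app, !IHN. lia. Qed.

Section Eval.
Variable Z : Type.
Variable op : Z -> Z -> Z.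
Variable E : tree I -> Z.
Hypothesis EP : forall a b, E (Pair a b) = op (E a) (E b).

Lemma E_bal d n : forall l, E (bal d n l) = Bz op (E d) n (map E l).
Proof.
  induction n as [|n IH]; intros l; simpl.
  - destruct l; reflexivity.
  - rewrite EP, !IH, firstn_map, skipn_map. reflexivity.
Qed.

Hypothesis ES : forall t, E t = op (E (fst (split t))) (E (snd (split t))).

Lemma E_slots dz N : forall t, Bz op dz N (map E (slots N t)) = E t.
Proof.
  induction N as [|N IH]; intros t; simpl; [reflexivity|].
  rewrite map_app, fa2, sa2 by (rewrite length_map, length_slots; lia).
  rewrite firstn_all2, skipn_all2 by (rewrite length_map, length_slots; lia).
  simpl. rewrite !IH. symmetry. apply ES.
Qed.

Hypothesis opC : forall a b, op a b = op b a.
Hypothesis opM : forall a b c e, op (op a b) (op c e) = op (op a c) (op b e).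

Lemma E_decomp d n t (H0 : list (tree I)) (rest : list (tree I)) :
  Permutation (slots (S n) t) (H0 ++ rest) -> length H0 = (2 ^ n)%nat ->
  E t = op (E (bal d n H0)) (E (bal d n rest)).
Proof.
  intros HP HL.
  rewrite <- (E_slots (E d) (S n) t).
  rewrite (Bz_perm op opC opM (E d) (S n) (map E (slots (S n) t)) (map E (H0 ++ rest))).
  - simpl. rewrite map_app, fa2, sa2 by (rewrite length_map; lia).
    rewrite firstn_all2, skipn_all2 by (rewrite length_map; lia). simpl.
    rewrite !E_bal. reflexivity.
  - apply Permutation_map. exact HP.
  - rewrite length_map, length_slots. reflexivity.
Qed.
End Eval.
End Trees.
Arguments bal {I}. Arguments split {I}. Arguments slots {I}.
Arguments E_bal {I Z}. Arguments E_slots {I Z}. Arguments E_decomp {I Z}.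

Lemma Series_zero : Series (fun _ => 0) = 0.
Proof.
  rewrite (Series_ext (fun _ => 0) (fun n => 0 * 0)) by (intros; ring).
  rewrite Series_scal_l. ring.
Qed.

Definition gh (l : nat) : R := (/ 2) ^ (S l).

Lemma gh_pos l : 0 < gh l.
Proof. unfold gh. apply pow_lt. lra. Qed.

Lemma is_series_gh : is_series gh 1.
Proof.
  assert (H := is_series_geom (/ 2)).
  assert (H1 : Rabs (/ 2) < 1) by (rewrite Rabs_pos_eq; lra).
  specialize (H H1).
  apply (is_series_scal_l (/ 2)) in H.
  replace 1 with (scal (/2) (/ (1 - / 2))).
  - eapply is_series_ext; [|exact H]. intros n. reflexivity.
  - unfold scal; simpl. unfold mult; simpl. field.
Qed.

Lemma ex_series_gh : ex_series gh.
Proof. exists 1. apply is_series_gh. Qed.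

Lemma Series_gh : Series gh = 1.
Proof. apply is_series_unique, is_series_gh. Qed.

Lemma ex_series_ghb (c : nat -> R) (K : R) :
  (forall l, Rabs (c l) <= K) -> ex_series (fun l => gh l * c l).
Proof.
  intros Hc. apply (@ex_series_le R_AbsRing R_CompleteNormedModule _ (fun l => K * gh l)).
  - intros n. change (norm (gh n * c n)) with (Rabs (gh n * c n)).
    rewrite Rabs_mult, Rabs_pos_eq by (left; apply gh_pos).
    rewrite Rmult_comm. apply Rmult_le_compat_r; [left; apply gh_pos|apply Hc].
  - pose proof (ex_series_scal_l K gh ex_series_gh) as HH. exact HH.
Qed.

Section W.
Variable I : Type.

Definition sumD (p : I -> R) (D : list I) : R := fold_right (fun a r => p a + r) 0 D.

Definition Inv (t : tree I) : Prop :=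
  (forall a, 0 <= weight t a) /\ (forall D, NoDup D -> sumD (weight t) D <= 1).

Lemma Inv_le1 t : Inv t -> forall a, weight t a <= 1.
Proof.
  intros [H1 H2] a. assert (HN : NoDup [a]) by (constructor; [simpl; tauto|constructor]).
  specialize (H2 [a] HN). unfold sumD in H2; simpl in H2. lra.
Qed.

Lemma sumD_nonneg (p : I -> R) D : (forall a, 0 <= p a) -> 0 <= sumD p D.
Proof. intros H. induction D; simpl; [lra|]. specialize (H a). lra. Qed.

Lemma sumD_Series (c : nat -> I -> R) D :
  (forall l a, 0 <= c l a <= 1) ->
  sumD (fun a => Series (fun l => gh l * c l a)) D =
  Series (fun l => gh l * sumD (c l) D).
Proof.
  intros Hc. induction D as [|a D IH]; unfold sumD in *; simpl.
  - transitivity (Series (fun _ => 0)); [symmetry; apply Series_zero|apply Series_ext; intros; ring].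
  - rewrite IH. rewrite <- Series_plus.
    + apply Series_ext. intros; ring.
    + apply ex_series_ghb with (K := 1). intros l. specialize (Hc l a).
      rewrite Rabs_pos_eq; lra.
    + apply ex_series_ghb with (K := INR (length D)). intros l.
      assert (forall D, 0 <= sumD (c l) D <= INR (length D)).
      { unfold sumD. induction D0; cbn [fold_right length]; [simpl; lra|]. rewrite S_INR. specialize (Hc l a0). lra. }
      unfold sumD in H. rewrite Rabs_pos_eq by (apply H). apply H.
Qed.

Lemma Inv_all t : Inv t.
Proof.
  induction t as [i|s IHs u IHu|f IH].
  - split.
    + intros a. simpl. unfold delta. destruct excluded_middle_informative; lra.
    + intros D HD. simpl. induction HD as [|b D Hb HD IHD]; simpl; [lra|].
      unfold delta at 1. destruct excluded_middle_informative as [e|e].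
      * subst b. assert (sumD (fun j => delta i j) D = 0).
        { clear IHD HD. induction D as [|c D IHD']; simpl; [reflexivity|].
          unfold delta at 1. destruct excluded_middle_informative as [e|e].
          - subst. simpl in Hb. tauto.
          - rewrite IHD'; [ring|]. simpl in Hb. tauto. }
        rewrite H. lra.
      * lra.
  - destruct IHs as [Hs1 Hs2]. destruct IHu as [Hu1 Hu2]. split.
    + intros a. simpl. specialize (Hs1 a). specialize (Hu1 a). lra.
    + intros D HD. specialize (Hs2 D HD). specialize (Hu2 D HD).
      assert (sumD (weight (Pair s u)) D = / 2 * sumD (weight s) D + / 2 * sumD (weight u) D).
      { clear. unfold sumD. induction D; cbn [fold_right]; [ring|]. rewrite IHD. simpl. ring. }
      lra.
  - assert (Hc : forall l a, 0 <= weight (f l) a <= 1).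
    { intros l a. split; [apply (IH l)|apply Inv_le1, IH]. }
    split.
    + intros a. simpl. rewrite <- Series_zero. apply Series_le.
      * intros n. split; [lra|]. apply Rmult_le_pos; [left; apply gh_pos|apply Hc].
      * apply ex_series_ghb with (K := 1). intros l. rewrite Rabs_pos_eq; apply Hc.
    + intros D HD. simpl. change (fun j => Series (fun l => (/ 2) ^ S l * weight (f l) j))
        with (fun j => Series (fun l => gh l * weight (f l) j)).
      rewrite (sumD_Series (fun l a => weight (f l) a)) by exact Hc.
      rewrite <- Series_gh. apply Series_le.
      * intros n. split.
        -- apply Rmult_le_pos; [left; apply gh_pos|]. apply sumD_nonneg. apply IH.
        -- rewrite <- (Rmult_1_r (gh n)) at 2. apply Rmult_le_compat_l; [left; apply gh_pos|].
           apply IH, HD.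
      * apply ex_series_gh.
Qed.

Lemma weight_split (t : tree I) (a : I) :
  weight t a = / 2 * weight (fst (split t)) a + / 2 * weight (snd (split t)) a.
Proof.
  destruct t as [i|s u|f]; [simpl; lra|simpl; lra|simpl].
  assert (Hc : forall l, 0 <= weight (f l) a <= 1).
  { intros l. split; [apply (Inv_all (f l))|apply Inv_le1, Inv_all]. }
  rewrite Series_incr_1.
  - simpl. rewrite <- Series_scal_l. f_equal; [ring|]. apply Series_ext. intros n. simpl. ring.
  - apply (ex_series_ghb (fun l => weight (f l) a) 1). intros l. rewrite Rabs_pos_eq; apply Hc.
Qed.
End W.
Arguments Inv_all {I}. Arguments weight_split {I}. Arguments sumD {I}. Arguments Inv {I}. Arguments Inv_le1 {I}.

Section C.
Variable I : Type.
Definition eqd (x y : I) : {x = y} + {x <> y} := excluded_middle_informative (x = y).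

Fixpoint leafatoms (L : list (tree I)) : list I :=
  match L with
  | [] => []
  | Leaf a :: L' => a :: leafatoms L'
  | _ :: L' => leafatoms L'
  end.

Fixpoint nonleaves (L : list (tree I)) : list (tree I) :=
  match L with
  | [] => []
  | Leaf a :: L' => nonleaves L'
  | t :: L' => t :: nonleaves L'
  end.

Lemma leafatoms_app L1 L2 : leafatoms (L1 ++ L2) = leafatoms L1 ++ leafatoms L2.
Proof. induction L1 as [|t L1 IH]; simpl; [reflexivity|]. destruct t; simpl; rewrite IH; reflexivity. Qed.

Lemma nonleaves_app L1 L2 : nonleaves (L1 ++ L2) = nonleaves L1 ++ nonleaves L2.
Proof. induction L1 as [|t L1 IH]; simpl; [reflexivity|]. destruct t; simpl; rewrite IH; reflexivity. Qed.

Lemma leaf_perm L : Permutation L (map (@Leaf I) (leafatoms L) ++ nonleaves L).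
Proof.
  induction L as [|t L IH]; simpl; [constructor|].
  destruct t; simpl.
  - constructor. exact IH.
  - eapply Permutation_trans; [apply perm_skip; exact IH|]. apply Permutation_middle.
  - eapply Permutation_trans; [apply perm_skip; exact IH|]. apply Permutation_middle.
Qed.

Lemma count_bound N : forall (t : tree I) a,
  INR (count_occ eqd (leafatoms (slots N t)) a) <= 2 ^ N * weight t a.
Proof.
  induction N as [|N IH]; intros t a.
  - simpl. destruct t as [i|s u|f]; simpl.
    + unfold delta. destruct (eqd i a) as [e|e]; simpl;
      destruct (excluded_middle_informative (i = a)); try contradiction; simpl; lra.
    + destruct (Inv_all (Pair s u)) as [H _]. specialize (H a). simpl in H. lra.
    + destruct (Inv_all (Omega f)) as [H _]. specialize (H a). simpl in H. lra.
  - simpl slots. rewrite leafatoms_app, count_occ_app, plus_INR.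
    rewrite (weight_split t a).
    pose proof (IH (fst (split t)) a). pose proof (IH (snd (split t)) a).
    assert (E : 2 ^ S N * (/ 2 * weight (fst (split t)) a + / 2 * weight (snd (split t)) a)
      = 2 ^ N * weight (fst (split t)) a + 2 ^ N * weight (snd (split t)) a)
      by (simpl; field).
    rewrite E. lra.
Qed.

Lemma length_remove_count (U : list I) a :
  length U = (count_occ eqd U a + length (remove eqd a U))%nat.
Proof.
  induction U as [|b U IH]; simpl; [reflexivity|].
  destruct (eqd b a) as [e|e]; destruct (eqd a b) as [e'|e']; subst; try congruence; simpl; lia.
Qed.

Lemma count_remove_le (U : list I) a b :
  (count_occ eqd (remove eqd a U) b <= count_occ eqd U b)%nat.
Proof.
  induction U as [|c U IH]; simpl; [lia|].
  destruct (eqd a c); simpl; destruct (eqd c b); lia.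
Qed.

Lemma mass (p : I -> R) (K : R) : 0 <= K ->
  (forall D, NoDup D -> sumD p D <= 1) ->
  forall n U D, (length U <= n)%nat -> NoDup D -> (forall a, In a D -> ~ In a U) ->
  (forall a, INR (count_occ eqd U a) <= K * p a) ->
  INR (length U) + K * sumD p D <= K.
Proof.
  intros HK Hp n. induction n as [|n IH]; intros U D HU HD HDU Hc.
  - destruct U; [|simpl in HU; lia]. simpl.
    specialize (Hp D HD). nra.
  - destruct U as [|a U0].
    + simpl. specialize (Hp D HD). nra.
    + set (U := a :: U0) in *.
      assert (HaU : In a U) by (simpl; auto).
      assert (HaD : ~ In a D) by (intros H; apply (HDU a H HaU)).
      pose proof (remove_length_lt eqd U a HaU) as Hlt.
      specialize (IH (remove eqd a U) (a :: D)).
      assert (H1 : INR (length (remove eqd a U)) + K * sumD p (a :: D) <= K).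
      { apply IH.
        - lia.
        - constructor; auto.
        - intros b [Hb|Hb] Hin.
          + subst b. apply (remove_In eqd U a Hin).
          + apply in_remove in Hin. apply (HDU b Hb), Hin.
        - intros b. eapply Rle_trans; [|apply Hc]. apply le_INR, count_remove_le. }
      rewrite (length_remove_count U a), plus_INR.
      specialize (Hc a). unfold sumD in *. cbn [fold_right] in H1.
      rewrite Rmult_plus_distr_l in H1. lra.
Qed.

Lemma common (L1 : list I) : forall L2, exists c r1 r2,
  Permutation L1 (c ++ r1) /\ Permutation L2 (c ++ r2) /\
  (forall a, In a r1 -> In a r2 -> False).
Proof.
  induction L1 as [|a L1 IH]; intros L2.
  - exists [], [], L2. split; [simpl; constructor|split; [simpl; apply Permutation_refl|intros z []]].
  - destruct (excluded_middle_informative (In a L2)) as [Hin|Hnin].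
    + destruct (in_split a L2 Hin) as [l1 [l2 ->]].
      destruct (IH (l1 ++ l2)) as [c [r1 [r2 [H1 [H2 H3]]]]].
      exists (a :: c), r1, r2. repeat split; auto.
      * simpl. constructor. exact H1.
      * eapply Permutation_trans; [apply Permutation_sym, Permutation_middle|].
        simpl. constructor. exact H2.
    + destruct (IH L2) as [c [r1 [r2 [H1 [H2 H3]]]]].
      exists c, (a :: r1), r2. repeat split; auto.
      * eapply Permutation_trans; [apply perm_skip; exact H1|]. apply Permutation_middle.
      * intros b [Hb|Hb] Hb2.
        -- subst b. apply Hnin. apply (Permutation_in _ (Permutation_sym H2)).
           apply in_or_app. right. exact Hb2.
        -- apply (H3 b Hb Hb2).
Qed.

Definition nl (N : nat) (t : tree I) : nat := length (nonleaves (slots N t)).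

Lemma nl_S N t : nl (S N) t = (nl N (fst (split t)) + nl N (snd (split t)))%nat.
Proof. unfold nl. simpl. rewrite nonleaves_app, length_app. reflexivity. Qed.

Lemma nonleaves_le L : (length (nonleaves L) <= length L)%nat.
Proof. induction L as [|t L IH]; simpl; [lia|]. destruct t; simpl; lia. Qed.

Lemma nl_le N t : (nl N t <= 2 ^ N)%nat.
Proof. unfold nl. rewrite <- (length_slots I N t). apply nonleaves_le. Qed.

Lemma nl_mono N : forall t, (nl (S N) t <= 2 * nl N t)%nat.
Proof.
  induction N as [|N IH]; intros t.
  - rewrite nl_S. pose proof (nl_le 0 (fst (split t))). pose proof (nl_le 0 (snd (split t))).
    destruct t; unfold nl in *; simpl in *; lia.
  - rewrite (nl_S (S N) t), (nl_S N t). pose proof (IH (fst (split t))). pose proof (IH (snd (split t))).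
    lia.
Qed.

Lemma nl_mono_gen N t k : (nl N t * 2 ^ k <= 2 ^ N)%nat ->
  forall j, (nl (N + j) t * 2 ^ k <= 2 ^ (N + j))%nat.
Proof.
  intros H j. induction j as [|j IH].
  - rewrite Nat.add_0_r. exact H.
  - rewrite Nat.add_succ_r. pose proof (nl_mono (N + j) t).
    rewrite Nat.pow_succ_r'. nia.
Qed.

Lemma nl_mono_ge N t k : (nl N t * 2 ^ k <= 2 ^ N)%nat ->
  forall N', (N <= N')%nat -> (nl N' t * 2 ^ k <= 2 ^ N')%nat.
Proof.
  intros H N' HN. replace N' with (N + (N' - N))%nat by lia. apply nl_mono_gen. exact H.
Qed.

Lemma omega_inv k N j : forall f : nat -> tree I,
  (forall l, (l < j)%nat -> forall N', (N <= N')%nat -> (nl N' (f l) * 2 ^ (S k) <= 2 ^ N')%nat) ->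
  (nl (N + j) (Omega f) * 2 ^ (S k) <= 2 ^ (N + j) + 2 ^ (N + S k))%nat.
Proof.
  induction j as [|j IH]; intros f Hf.
  - rewrite Nat.add_0_r, Nat.pow_add_r. pose proof (nl_le N (Omega f)). nia.
  - rewrite Nat.add_succ_r, nl_S. simpl fst. simpl snd.
    pose proof (Hf 0%nat ltac:(lia) (N + j)%nat ltac:(lia)).
    pose proof (IH (fun n => f (S n)) ltac:(intros l Hl N' HN'; apply Hf; lia)).
    rewrite (Nat.pow_succ_r' 2 (N + j)), Nat.mul_add_distr_r. lia.
Qed.

Lemma nl_small (t : tree I) : forall k, exists N, (nl N t * 2 ^ k <= 2 ^ N)%nat.
Proof.
  induction t as [i|s IHs u IHu|f IH]; intros k.
  - exists 0%nat. unfold nl. simpl. lia.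
  - destruct (IHs k) as [Ns Hs]. destruct (IHu k) as [Nu Hu].
    exists (S (Nat.max Ns Nu)). rewrite nl_S. simpl fst; simpl snd.
    pose proof (nl_mono_ge Ns s k Hs (Nat.max Ns Nu) ltac:(lia)).
    pose proof (nl_mono_ge Nu u k Hu (Nat.max Ns Nu) ltac:(lia)).
    rewrite Nat.pow_succ_r'. nia.
  - assert (Hfin : forall j, exists N0, forall l, (l < j)%nat -> forall N', (N0 <= N')%nat ->
              (nl N' (f l) * 2 ^ (S k) <= 2 ^ N')%nat).
    { induction j as [|j IHj].
      - exists 0%nat. intros l Hl. lia.
      - destruct IHj as [N1 H1]. destruct (IH j (S k)) as [N2 H2].
        exists (Nat.max N1 N2). intros l Hl N' HN'.
        destruct (Nat.eq_dec l j) as [->|Hne].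
        + apply (nl_mono_ge N2); [exact H2|lia].
        + apply H1; lia. }
    destruct (Hfin (S k)) as [N0 H0].
    exists (N0 + S k)%nat.
    pose proof (omega_inv k N0 (S k) f H0) as HH.
    rewrite Nat.pow_succ_r' in HH. nia.
Qed.
End C.
Arguments leafatoms {I}. Arguments nonleaves {I}. Arguments nl {I}.

Section Main.
Variable X : Type.
Variable m : X -> X -> X.
Hypothesis Hmid : midpoint_set m.
Variable M : (nat -> X) -> X.
Hypothesis HM : assoc_M_eq m M.
Variable I : Type.
Variable x : I -> X.

Lemma val_split (t : tree I) :
  val m M t x = m (val m M (fst (split t)) x) (val m M (snd (split t)) x).
Proof.
  destruct Hmid as [Hi [Hc Hm]].
  destruct t as [i|s u|f]; simpl.
  - symmetry. apply Hi.
  - reflexivity.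
  - apply HM.
Qed.

Lemma pow_INR2 N : INR (2 ^ N) = 2 ^ N.
Proof. rewrite pow_INR. simpl. try (f_equal; ring). Qed.

Lemma step (s t : tree I) : (forall a, weight s a = weight t a) ->
  exists h s' t', (forall a, weight s' a = weight t' a) /\
    val m M s x = m h (val m M s' x) /\ val m M t x = m h (val m M t' x).
Proof.
  intros Hw. destruct Hmid as [Hi [Hc Hm]].
  destruct (nl_small I s 2) as [Ns Hs]. destruct (nl_small I t 2) as [Nt Ht].
  set (n := Nat.max Ns Nt). set (N := S n).
  assert (Hs' : (nl N s * 2 ^ 2 <= 2 ^ N)%nat) by (apply (nl_mono_ge I Ns); [exact Hs|lia]).
  assert (Ht' : (nl N t * 2 ^ 2 <= 2 ^ N)%nat) by (apply (nl_mono_ge I Nt); [exact Ht|lia]).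
  set (Ls := slots N s). set (Lt := slots N t).
  destruct (common I (leafatoms Ls) (leafatoms Lt)) as [c [r1 [r2 [H1 [H2 H3]]]]].
  assert (Hcount : forall a, INR (count_occ (eqd I) (c ++ r1 ++ r2) a) <= 2 ^ N * weight s a).
  { intros a. rewrite !count_occ_app.
    assert (C1 : count_occ (eqd I) (leafatoms Ls) a = (count_occ (eqd I) c a + count_occ (eqd I) r1 a)%nat).
    { rewrite <- count_occ_app. apply Permutation_count_occ. exact H1. }
    assert (C2 : count_occ (eqd I) (leafatoms Lt) a = (count_occ (eqd I) c a + count_occ (eqd I) r2 a)%nat).
    { rewrite <- count_occ_app. apply Permutation_count_occ. exact H2. }
    pose proof (count_bound I N s a) as B1. pose proof (count_bound I N t a) as B2.
    fold Ls in B1. fold Lt in B2. rewrite <- Hw in B2.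
    destruct (Nat.eq_dec (count_occ (eqd I) r1 a) 0) as [Z1|Z1].
    - rewrite Z1. rewrite C2 in B2. rewrite Nat.add_0_l. exact B2.
    - assert (Hin : In a r1) by (apply (count_occ_In (eqd I)); lia).
      assert (Z2 : count_occ (eqd I) r2 a = 0%nat).
      { apply (count_occ_not_In (eqd I)). intros Hin2. apply (H3 a Hin Hin2). }
      rewrite Z2, Nat.add_0_r. rewrite C1 in B1. exact B1. }
  pose proof (mass I (weight s) (2 ^ N) ltac:(apply pow_le; lra)
    (proj2 (Inv_all s)) (length (c ++ r1 ++ r2)) (c ++ r1 ++ r2) []
    ltac:(lia) ltac:(constructor) ltac:(intros a []) Hcount) as HU.
  unfold sumD in HU. cbn [fold_right] in HU.
  rewrite Rmult_0_r, Rplus_0_r, <- (pow_INR2 N) in HU. apply INR_le in HU.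
  rewrite !length_app in HU.
  assert (LS : (length (leafatoms Ls) + nl N s = 2 ^ N)%nat).
  { unfold nl. fold Ls. rewrite <- (length_slots I N s). fold Ls.
    rewrite (Permutation_length (leaf_perm I Ls)), length_app, length_map. reflexivity. }
  assert (LT : (length (leafatoms Lt) + nl N t = 2 ^ N)%nat).
  { unfold nl. fold Lt. rewrite <- (length_slots I N t). fold Lt.
    rewrite (Permutation_length (leaf_perm I Lt)), length_app, length_map. reflexivity. }
  rewrite (Permutation_length H1), length_app in LS.
  rewrite (Permutation_length H2), length_app in LT.
  assert (EN : (2 ^ N = 2 ^ n + 2 ^ n)%nat) by (unfold N; simpl; lia).
  assert (Hc0 : (2 ^ n <= length c)%nat).
  { rewrite EN in *. simpl in Hs', Ht'. lia. }
  set (c0 := firstn (2 ^ n) c). set (c1 := skipn (2 ^ n) c).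
  assert (Lc0 : length c0 = (2 ^ n)%nat) by (unfold c0; rewrite length_firstn; lia).
  set (rs := map (@Leaf I) c1 ++ map (@Leaf I) r1 ++ nonleaves Ls).
  set (rt := map (@Leaf I) c1 ++ map (@Leaf I) r2 ++ nonleaves Lt).
  assert (PS : Permutation (slots N s) (map (@Leaf I) c0 ++ rs)).
  { fold Ls. eapply Permutation_trans; [apply leaf_perm|].
    eapply Permutation_trans; [apply Permutation_app_tail, Permutation_map, H1|].
    rewrite <- (firstn_skipn (2 ^ n) c). fold c0 c1. unfold rs.
    rewrite !map_app, <- !app_assoc. apply Permutation_refl. }
  assert (PT : Permutation (slots N t) (map (@Leaf I) c0 ++ rt)).
  { fold Lt. eapply Permutation_trans; [apply leaf_perm|].
    eapply Permutation_trans; [apply Permutation_app_tail, Permutation_map, H2|].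
    rewrite <- (firstn_skipn (2 ^ n) c). fold c0 c1. unfold rt.
    rewrite !map_app, <- !app_assoc. apply Permutation_refl. }
  assert (LH : length (map (@Leaf I) c0) = (2 ^ n)%nat) by (rewrite length_map; exact Lc0).
  exists (val m M (bal s n (map (@Leaf I) c0)) x), (bal s n rs), (bal s n rt).
  split; [|split].
  - intros a.
    assert (EP : forall u v : tree I, weight (Pair u v) a = / 2 * weight u a + / 2 * weight v a)
      by reflexivity.
    assert (ES : forall u : tree I, weight u a = / 2 * weight (fst (split u)) a + / 2 * weight (snd (split u)) a)
      by (intros; apply weight_split).
    assert (oC : forall p q : R, / 2 * p + / 2 * q = / 2 * q + / 2 * p) by (intros; lra).
    assert (oM : forall p q r e : R, / 2 * (/ 2 * p + / 2 * q) + / 2 * (/ 2 * r + / 2 * e)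
       = / 2 * (/ 2 * p + / 2 * r) + / 2 * (/ 2 * q + / 2 * e)) by (intros; lra).
    pose proof (E_decomp (fun p q => / 2 * p + / 2 * q) (fun u => weight u a) EP ES oC oM s n s _ _ PS LH) as W1.
    pose proof (E_decomp (fun p q => / 2 * p + / 2 * q) (fun u => weight u a) EP ES oC oM s n t _ _ PT LH) as W2.
    simpl in W1, W2. rewrite Hw in W1. lra.
  - apply (E_decomp m (fun u => val m M u x) (fun u v => eq_refl) val_split Hc Hm s n s _ _ PS LH).
  - apply (E_decomp m (fun u => val m M u x) (fun u v => eq_refl) val_split Hc Hm s n t _ _ PT LH).
Qed.
End Main.

Theorem mainTheorem11 (X : Type) (m : X -> X -> X)
  (Hmid : midpoint_set m) (Hit : iterative m)
  (M : (nat -> X) -> X) (HM : assoc_M_eq m M)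
  (I : Type) (s t : tree I) :
  weight s = weight t ->
  forall x : I -> X, val m M s x = val m M t x.
Proof.
  intros Hw x.
  set (Y := {p : tree I * tree I | forall a, weight (fst p) a = weight (snd p) a}).
  assert (Hstep : forall y : Y, {q : X * Y |
     val m M (fst (proj1_sig y)) x = m (fst q) (val m M (fst (proj1_sig (snd q))) x) /\
     val m M (snd (proj1_sig y)) x = m (fst q) (val m M (snd (proj1_sig (snd q))) x)}).
  { intros [[s0 t0] Hw0]. apply constructive_indefinite_description.
    destruct (step X m Hmid M HM I x s0 t0 Hw0) as [h [s' [t' [Hw' [E1 E2]]]]].
    exists (h, (exist _ (s', t') Hw' : Y)). simpl. auto. }
  set (hh := fun y => fst (proj1_sig (Hstep y))).
  set (tt := fun y => snd (proj1_sig (Hstep y))).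
  destruct (Hit Y hh tt) as [u [Hu Huniq]].
  assert (e1 : u = fun y : Y => val m M (fst (proj1_sig y)) x).
  { apply Huniq. intros y. exact (proj1 (proj2_sig (Hstep y))). }
  assert (e2 : u = fun y : Y => val m M (snd (proj1_sig y)) x).
  { apply Huniq. intros y. exact (proj2 (proj2_sig (Hstep y))). }
  assert (Hw0 : forall a, weight (fst (s, t)) a = weight (snd (s, t)) a)
    by (intros a; simpl; rewrite Hw; reflexivity).
  pose (y0 := exist _ (s, t) Hw0 : Y).
  transitivity (u y0).
  - rewrite e1. reflexivity.
  - rewrite e2. reflexivity.
Qed.
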